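(* Let $p$ be an odd prime and let $O_n(\mathbb Z_{(p)})$ act on $\mathbb Z_{(p)}^n$ in the canonical way. Then $H_i(O_n(\mathbb Z_{(p)});\mathbb Z_{(p)}^n)=0$ for $i\leq\frac{n-8}{2}$.
   Context: $\mathbb Z_{(p)}$ is the localization of $\mathbb Z$ at the prime ideal $(p)$. $O_n(\mathbb Z_{(p)})$ is the group of $\mathbb Z_{(p)}$-linear automorphisms of $\mathbb Z_{(p)}^n$ preserving the form $x_1^2+\dots+x_n^2$. *)

(* Defs.v *)
From HB Require Import structures.
From mathcomp Require Import all_boot all_order all_algebra.
Set Implicit Arguments. Unset Strict Implicit. Unset Printing Implicit Defensive.
Import Order.TTheory GRing.Theory Num.Theory.
Local Open Scope ring_scope.

(** Z_(p), the localization of Z at (p), as a subring of Q: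
    rationals whose (reduced, positive) denominator is not divisible by p. *)
Definition inZp (p : nat) (q : rat) : bool := ~~ (p %| `|denq q|)%N.

Definition inZpvec (p n : nat) (v : 'cV[rat]_n) : bool :=
  [forall i, inZp p (v i 0)].

Definition inZpmx (p n : nat) (A : 'M[rat]_n) : bool :=
  [forall i, forall j, inZp p (A i j)].

Definition sqform (n : nat) (v : 'cV[rat]_n) : rat := \sum_(i < n) v i 0 ^+ 2.

Definition inOn (p n : nat) (A : 'M[rat]_n) : Prop :=
  [/\ inZpmx p A, A \in unitmx, inZpmx p (invmx A) &
      forall v : 'cV[rat]_n, inZpvec p v -> sqform (A *m v) = sqform v].

(** Group homology H_*(G; M) via the (inhomogeneous) bar complex.
    G is a group of n x n rational matrices (given by a predicate), M a
    G-stable additive subgroup of Q^n (given by a predicate), with the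
    canonical left action g . m = g *m m.  As usual, M is turned into a right
    ZG-module by m . g = g^-1 m, and C_i(G;M) = M (x)_{ZG} B_i = (+)_{G^i} M.
    A chain is a formal finite sum of terms m [g_1|...|g_i], represented by a
    list of pairs ([:: g_1; ...; g_i], m). *)
Definition term n := (seq 'M[rat]_n * 'cV[rat]_n)%type.

Definition merge n (j : nat) (g : seq 'M[rat]_n) : seq 'M[rat]_n :=
  take j g ++ (nth 0 g j *m nth 0 g j.+1) :: drop j.+2 g.

Definition bd_term n (t : term n) : seq (term n) :=
  match t.1 with
  | [::] => [::]
  | g1 :: gs =>
      (gs, invmx g1 *m t.2)
      :: [seq (merge j t.1, (-1) ^+ j.+1 *: t.2) | j <- iota 0 (size t.1).-1]
      ++ [:: (take (size t.1).-1 t.1, (-1) ^+ size t.1 *: t.2)]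
  end.

Definition bd n (c : seq (term n)) : seq (term n) := flatten (map (@bd_term n) c).

Definition ev n (c : seq (term n)) (y : seq 'M[rat]_n) : 'cV[rat]_n :=
  \sum_(t <- c | t.1 == y) t.2.

Definition is_chain n (G : 'M[rat]_n -> Prop) (M : pred 'cV[rat]_n)
    (i : nat) (c : seq (term n)) : Prop :=
  forall t, t \in c -> [/\ size t.1 = i, forall g, g \in t.1 -> G g & M t.2].

Definition homology_vanishes n (G : 'M[rat]_n -> Prop) (M : pred 'cV[rat]_n)
    (i : nat) : Prop :=
  forall c : seq (term n), is_chain G M i c ->
    (forall y, ev (bd c) y = 0) ->
    exists b : seq (term n), is_chain G M i.+1 b /\
      forall y, ev (bd b) y = ev c y.

(* Main.v *)
Require Import Defs.
From mathcomp Require Import all_boot all_order all_algebra.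
From mathcomp Require Import zify ring.
Set Implicit Arguments. Unset Strict Implicit. Unset Printing Implicit Defensive.
Import Order.TTheory GRing.Theory Num.Theory.
Local Open Scope ring_scope.

Section Lists.
Variable n : nat.
Local Notation M := 'M[rat]_n.
Variable z : M.

Definition ins (j : nat) (g : seq M) : seq M := take j g ++ z :: drop j g.
Local Notation mrg := (@Defs.merge n).

Arguments ins : simpl never.
Arguments Defs.merge : simpl never.
Lemma ins0 g : ins 0 g = z :: g. Proof. by rewrite /ins take0 drop0. Qed.
Lemma insS j a g : ins j.+1 (a :: g) = a :: ins j g. Proof. by []. Qed.
Lemma mrgS k a g : mrg k.+1 (a :: g) = a :: mrg k g. Proof. by []. Qed.
Lemma mrg0 a b g : mrg 0 [:: a, b & g] = (a *m b) :: g. Proof. by rewrite /Defs.merge /= drop0. Qed.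
Lemma size_ins j g : (j <= size g)%N -> size (ins j g) = (size g).+1.
Proof.
elim: g j => [|a g IH] [|j] h; rewrite ?ins0 //.
by rewrite insS /= IH.
Qed.
Lemma size_mrg k g : (k.+1 < size g)%N -> size (mrg k g) = (size g).-1.
Proof.
elim: g k => [|a g IH] [|k] //.
  by case: g IH => [|b g] IH // _; rewrite mrg0.
move=> h; rewrite mrgS /= IH //.
by case: g IH h => [|b g].
Qed.

Lemma mrg_ins_lt k j g : (k.+1 < j)%N -> (j <= size g)%N -> mrg k (ins j g) = ins j.-1 (mrg k g).
Proof.
elim: g j k => [|a g IH] j k h1 h2; first by move: h2; rewrite leqn0 => /eqP h; subst.
case: k h1 => [|k] h1.
  case: j h1 h2 => [|[|j]] // _ h2.
  case: g IH h2 => [|b g] // _ h2.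
  by rewrite [in LHS]insS [in LHS]insS !mrg0 /= insS.
case: j h1 h2 => [|j] // h1 h2.
rewrite insS mrgS IH //.
by case: j h1 h2 => [|j] // h1 h2; rewrite /= mrgS insS.
Qed.

Lemma mrg_ins_eq1 k g : (k < size g)%N ->
  mrg k (ins k.+1 g) = take k g ++ (nth 0 g k *m z) :: drop k.+1 g.
Proof.
elim: g k => [|a g IH] [|k] //= h.
  by rewrite insS ins0 mrg0 /= ?take0 ?drop0.
by rewrite insS mrgS IH.
Qed.

Lemma mrg_ins_eq0 k g : (k < size g)%N ->
  mrg k (ins k g) = take k g ++ (z *m nth 0 g k) :: drop k.+1 g.
Proof.
elim: g k => [|a g IH] [|k] //= h.
by rewrite insS mrgS IH.
Qed.

Lemma mrg_ins_gt k j g : (j <= k)%N -> (k.+1 < size g)%N ->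
  mrg k.+1 (ins j g) = ins j (mrg k g).
Proof.
elim: g j k => [|a g IH] [|j] k //= h1 h2.
- by rewrite ins0 mrgS ins0.
- case: k h1 h2 => [|k] // h1 h2.
  by rewrite insS !mrgS insS IH.
Qed.

Lemma take_ins_last g : take (size g) (ins (size g) g) = g.
Proof.
elim: g => [|a g IH]; first by rewrite /ins.
by rewrite [size (a :: g)]/= insS /= IH.
Qed.

Lemma take_ins j g : (j < size g)%N -> take (size g) (ins j g) = ins j (take (size g).-1 g).
Proof.
elim: g j => [|a g IH] [|j] // h.
  by rewrite [size (a :: g)]/= !ins0.
rewrite [size (a :: g)]/= insS /= IH //.
by case: g IH h => [|b g] //= IH h; rewrite insS.
Qed.
Lemma ins_neq0 j g : ins j g != [::].
Proof. by rewrite /ins; case: (take j g). Qed.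
End Lists.
Arguments ins : simpl never.
Arguments Defs.merge : simpl never.

Section Ev.
Variable n : nat.
Local Notation M := 'M[rat]_n.
Local Notation V := 'cV[rat]_n.
Local Notation mrg := (@Defs.merge n).

Definition ev1 (y x : seq M) (v : V) : V := if x == y then v else 0.

Lemma ev1D y x u v : ev1 y x (u + v) = ev1 y x u + ev1 y x v.
Proof. by rewrite /ev1; case: ifP; rewrite ?addr0. Qed.
Lemma ev1N y x v : ev1 y x (- v) = - ev1 y x v.
Proof. by rewrite /ev1; case: ifP; rewrite ?oppr0. Qed.
Lemma ev1Z y x c v : ev1 y x (c *: v) = c *: ev1 y x v.
Proof. by rewrite /ev1; case: ifP; rewrite ?scaler0. Qed.
Lemma ev10 y x : ev1 y x 0 = 0.
Proof. by rewrite /ev1; case: ifP. Qed.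

Lemma ev_nil y : ev [::] y = 0 :> V.
Proof. by rewrite /ev big_nil. Qed.
Lemma ev_cons (t : term n) l y : ev (t :: l) y = ev1 y t.1 t.2 + ev l y.
Proof. by rewrite /ev big_cons /ev1; case: ifP; rewrite ?add0r. Qed.
Lemma ev_cat (l1 l2 : seq (term n)) y : ev (l1 ++ l2) y = ev l1 y + ev l2 y.
Proof. by rewrite /ev big_cat. Qed.
Lemma ev_flatten (f : term n -> seq (term n)) l y :
  ev (flatten (map f l)) y = \sum_(t <- l) ev (f t) y.
Proof.
elim: l => [|t l IH]; first by rewrite big_nil ev_nil.
by rewrite /= ev_cat IH big_cons.
Qed.
Lemma ev_map (A : Type) (f : A -> term n) s y :
  ev (map f s) y = \sum_(x <- s) ev1 y (f x).1 (f x).2.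
Proof.
elim: s => [|a s IH]; first by rewrite big_nil ev_nil.
by rewrite /= ev_cons IH big_cons.
Qed.
Lemma ev_map_iota (f : nat -> term n) a b y :
  ev (map f (iota a b)) y = \sum_(a <= j < a + b) ev1 y (f j).1 (f j).2.
Proof. by rewrite ev_map /index_iota addKn. Qed.

Lemma ev_bd_term (x : seq M) v y : x != [::] ->
  ev (bd_term (x, v)) y =
  ev1 y (behead x) (invmx (head 0 x) *m v)
  + \sum_(0 <= k < (size x).-1) ev1 y (mrg k x) ((-1) ^+ k.+1 *: v)
  + ev1 y (take (size x).-1 x) ((-1) ^+ size x *: v).
Proof.
case: x => [|a x] // _.
rewrite /bd_term /= ev_cons ev_cat ev_map_iota ev_cons ev_nil addr0 add0n addrA.
by [].
Qed.

End Ev.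

Section Homotopy.
Variable n : nat.
Local Notation M := 'M[rat]_n.
Local Notation V := 'cV[rat]_n.
Local Notation mrg := (@Defs.merge n).
Definition zz : M := (-1)%:M.
Local Notation z := zz.
Local Notation ins := (ins zz).

Definition hh (t : term n) : seq (term n) :=
  [seq (ins j t.1, (-1) ^+ j *: t.2) | j <- iota 0 (size t.1).+1].

Lemma ev_hh t y : ev (hh t) y = \sum_(0 <= j < (size t.1).+1) ev1 y (ins j t.1) ((-1) ^+ j *: t.2).
Proof. by rewrite /hh ev_map_iota add0n. Qed.

Lemma zinv (v : V) : invmx z *m v = - v.
Proof. by rewrite /zz invmx_scalar invrN1 mul_scalar_mx scaleN1r. Qed.

Lemma zC (A : M) : A *m z = z *m A.
Proof. exact: scalar_mxC. Qed.

Lemma signS j (v : V) : (-1) ^+ j.+1 *: v = - ((-1) ^+ j *: v).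
Proof. by rewrite exprS mulN1r scaleNr. Qed.

Lemma PA a g' m y :
  \sum_(0 <= j < (size g').+2) ev1 y (behead (ins j (a :: g'))) (invmx (head 0 (ins j (a :: g'))) *m ((-1) ^+ j *: m))
  + \sum_(0 <= j < (size g').+1) ev1 y (ins j g') ((-1) ^+ j *: (invmx a *m m)) = ev1 y (a :: g') (- m).
Proof.
rewrite big_nat_recl // ins0 expr0 scale1r [behead _]/= [head _ _]/= zinv -addrA.
rewrite -big_split big1 ?addr0 // => j _.
by rewrite insS /= -ev1D -scalemxAr signS addNr ev10.
Qed.

Lemma sign_sq s : (-1) ^+ s * (-1) ^+ s = 1 :> rat.
Proof. by rewrite -exprD addnn -mul2n exprM sqrrN !expr1n. Qed.

Lemma PC g m y :
 \sum_(0 <= j < (size g).+1) ev1 y (take (size g) (ins j g)) ((-1) ^+ (size g).+1 *: ((-1) ^+ j *: m))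
 + \sum_(0 <= j < size g) ev1 y (ins j (take (size g).-1 g)) ((-1) ^+ j *: ((-1) ^+ size g *: m))
 = ev1 y g (- m).
Proof.
rewrite big_nat_recr //= take_ins_last signS scalerA sign_sq scale1r addrAC.
rewrite -big_split big_nat_cond big1 ?add0r // => j; rewrite andbT => /andP[_ hj].
by rewrite /= take_ins // -ev1D signS !scalerA mulrC addNr ev10.
Qed.

Lemma split4 (f : nat -> V) j i : (j <= i)%N ->
  \sum_(0 <= k < i) f k = \sum_(0 <= k < j.-1) f k + (if (0 < j)%N then f j.-1 else 0)
     + (if (j < i)%N then f j else 0) + \sum_(j.+1 <= k < i) f k.
Proof.
case: j => [|j] hj.
  rewrite /= [\sum_(0 <= k < 0.-1) _]big_geq // !add0r.
  by case: i hj => [|i] _ /=; [rewrite !big_geq ?addr0 | rewrite big_ltn].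
rewrite (big_cat_nat (leq0n j) (ltnW hj)) /= [\sum_(j <= k < i) _]big_ltn // -!addrA; congr (_ + (_ + _)).
case: ltnP => h; first by rewrite big_ltn.
have -> : i = j.+1 by apply/eqP; rewrite eqn_leq hj h.
by rewrite !big_geq // addr0.
Qed.

Definition FF g m y j k : V := ev1 y (mrg k (ins j g)) ((-1) ^+ k.+1 *: ((-1) ^+ j *: m)).
Definition GG g m y j k : V := ev1 y (ins j (mrg k g)) ((-1) ^+ j *: ((-1) ^+ k.+1 *: m)).

Arguments FF : simpl never.
Arguments GG : simpl never.

Lemma PB g m y : (0 < size g)%N ->
 \sum_(0 <= j < (size g).+1) \sum_(0 <= k < size g) FF g m y j k
 + \sum_(0 <= k < (size g).-1) \sum_(0 <= j < size g) GG g m y j k = 0.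
Proof.
move=> hs.
rewrite (eq_big_nat _ _ (F2 := fun j => \sum_(0 <= k < j.-1) FF g m y j k + (if (0 < j)%N then FF g m y j j.-1 else 0)
     + (if (j < (size g))%N then FF g m y j j else 0) + \sum_(j.+1 <= k < (size g)) FF g m y j k)); last first.
  by move=> j /andP[_ hj]; apply: split4.
rewrite !big_split /=.
rewrite (big_nat_recl _ _ _ (leq0n (size g))) big_geq //= add0r.
rewrite (big_nat_recl _ _ _ (leq0n (size g))) /= add0r.
rewrite (big_nat_recr _ _ _ (leq0n (size g))) ltnn /= addr0.
rewrite (big_nat_recr _ _ _ (leq0n (size g))) /= [\sum_((size g).+1 <= k < (size g)) _]big_geq // addr0.
rewrite exchange_big_nat.
rewrite [X in _ + X = 0](eq_big_nat _ _ (F2 := fun j => \sum_(0 <= k < j) GG g m y j k + \sum_(j <= k < (size g).-1) GG g m y j k)); last first.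
  by move=> j /andP[_ hj]; rewrite (big_cat_nat (leq0n j)) //; lia.
have e1 : \sum_(0 <= j < (size g)) \sum_(0 <= k < j) FF g m y j.+1 k
   + \sum_(0 <= j < (size g)) \sum_(0 <= k < j) GG g m y j k = 0.
  rewrite -big_split big_nat_cond big1 // => j /andP[/andP[_ hj] _] /=.
  rewrite -big_split big_nat_cond big1 // => k /andP[/andP[_ hk] _] /=.
  rewrite /FF /GG mrg_ins_lt //.
  rewrite [j.+1.-1]/= -ev1D !scalerA -scalerDl.
  rewrite [X in X *: m](_ : _ = 0) ?scale0r ?ev10 //; rewrite !exprS; ring.
have e2 : \sum_(0 <= j < (size g)) FF g m y j.+1 j
   + \sum_(0 <= j < (size g)) (if (j < (size g))%N then FF g m y j j else 0) = 0.
  rewrite -big_split big_nat_cond big1 // => j /andP[/andP[_ hj] _] /=.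
  rewrite hj /FF mrg_ins_eq1 // mrg_ins_eq0 // zC.
  rewrite -ev1D !scalerA -scalerDl.
  rewrite [X in X *: m](_ : _ = 0) ?scale0r ?ev10 //; rewrite !exprS; ring.
have e3 : \sum_(0 <= j < (size g)) \sum_(j.+1 <= k < (size g)) FF g m y j k
   + \sum_(0 <= j < (size g)) \sum_(j <= k < (size g).-1) GG g m y j k = 0.
  rewrite -big_split big_nat_cond big1 // => j /andP[/andP[_ hj] _] /=.
  rewrite -[j.+1]addn1 big_addn subn1 -big_split big_nat_cond big1 // => k /andP[/andP[hk1 hk2] _] /=.
  rewrite addn1 /FF /GG mrg_ins_gt //; last by lia.
  rewrite -ev1D !scalerA -scalerDl.
  rewrite [X in X *: m](_ : _ = 0) ?scale0r ?ev10 //; rewrite !exprS; ring.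
rewrite big_split /=.
move/eqP: e1; rewrite addr_eq0 => /eqP ->.
move/eqP: e2; rewrite addr_eq0 => /eqP ->.
move/eqP: e3; rewrite addr_eq0 => /eqP ->.
by rewrite addrNK -opprD addNr.
Qed.


Lemma iota_idx N : iota 0 N = index_iota 0 N.
Proof. by rewrite /index_iota subn0. Qed.

Lemma ev_bd_hh g m y : ev (bd (hh (g, m))) y =
  \sum_(0 <= j < (size g).+1) (ev1 y (behead (ins j g)) (invmx (head 0 (ins j g)) *m ((-1) ^+ j *: m))
     + \sum_(0 <= k < size g) FF g m y j k
     + ev1 y (take (size g) (ins j g)) ((-1) ^+ (size g).+1 *: ((-1) ^+ j *: m))).
Proof.
rewrite /bd ev_flatten /hh big_map iota_idx.
apply: eq_big_nat => j /andP[_ hj].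
by rewrite ev_bd_term ?ins_neq0 // size_ins.
Qed.

Lemma ev_hh_bd g m y : g != [::] -> ev (flatten (map hh (bd_term (g, m)))) y =
  \sum_(0 <= j < size g) ev1 y (ins j (behead g)) ((-1) ^+ j *: (invmx (head 0 g) *m m))
  + \sum_(0 <= k < (size g).-1) \sum_(0 <= j < size g) GG g m y j k
  + \sum_(0 <= j < size g) ev1 y (ins j (take (size g).-1 g)) ((-1) ^+ j *: ((-1) ^+ size g *: m)).
Proof.
case: g => [|a g'] // _.
rewrite ev_flatten /bd_term /= big_cons big_cat big_map big_seq1 /= !ev_hh /= addrA.
congr (_ + _ + _).
  rewrite iota_idx; apply: eq_big_nat => k /andP[_ hk].
  by rewrite ev_hh size_mrg //= /GG.
by rewrite size_takel //= leqnSn.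
Qed.

Lemma addr3ACA (a b c d e f : V) : (a + b + c) + (d + e + f) = (a + d) + (b + e) + (c + f).
Proof. by rewrite addrACA [a + b + _]addrACA. Qed.

Lemma homotopy g m y :
  ev (bd (hh (g, m))) y + ev (flatten (map hh (bd_term (g, m)))) y = ev1 y g (- m) + ev1 y g (- m).
Proof.
case: g => [|a g'].
  rewrite ev_bd_hh big_nat1 ins0 [behead _]/= [head _ _]/= zinv big_geq // expr0 scale1r addr0.
  rewrite /bd_term /= ev_nil addr0 /= expr1 scaleN1r ev1N.
  by [].
rewrite ev_bd_hh ev_hh_bd // !big_split /= addr3ACA.
set G := a :: g'.
have hA : \sum_(0 <= j < (size G).+1) ev1 y (behead (ins j G)) (invmx (head 0 (ins j G)) *m ((-1) ^+ j *: m))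
  + \sum_(0 <= j < size G) ev1 y (ins j (behead G)) ((-1) ^+ j *: (invmx (head 0 G) *m m)) = ev1 y G (- m).
  exact: PA.
have hB := PB m y (isT : (0 < size G)%N).
have hC := PC G m y.
rewrite hA hB hC addr0 //.
Qed.

End Homotopy.

Section RatZp.

Lemma denq_dvd (x : rat) (d k : int) : x * d%:~R = k%:~R -> (denq x %| d)%Z.
Proof.
move=> hk.
have E : numq x * d = k * denq x.
  apply: (@intr_inj rat); rewrite !rmorphM /= numqE -hk; ring.
have h : (denq x %| numq x * d)%Z by rewrite E dvdz_mull.
rewrite Gauss_dvdzr // in h.
by rewrite /coprimez gcdzC; have := coprime_num_den x; rewrite /coprime /gcdz.
Qed.

Lemma inZp_mul p (x y : rat) : prime p -> Defs.inZp p x -> Defs.inZp p y -> Defs.inZp p (x * y).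
Proof.
move=> hp hx hy.
have : (denq (x * y) %| denq x * denq y)%Z.
  apply: (denq_dvd (k := numq x * numq y)).
  by rewrite !rmorphM /= !numqE; ring.
move=> hd; have {hd} : (`|denq (x * y)| %| `|denq x| * `|denq y|)%N by rewrite -abszM. move=> hd; rewrite /Defs.inZp; apply/negP => hpd.
have := dvdn_trans hpd hd; rewrite Euclid_dvdM //.
by case/orP => [h|h]; [move: hx | move: hy]; rewrite /Defs.inZp h.
Qed.

Lemma inZp_int p (k : int) : prime p -> Defs.inZp p k%:~R.
Proof. by move=> hp; rewrite /Defs.inZp denq_int /= dvdn1; case: p hp => [|[|]]. Qed.

Lemma inZp_half p : prime p -> odd p -> Defs.inZp p (2%:R^-1).
Proof.
move=> hp ho; rewrite /Defs.inZp.
have -> : (2%:R : rat) = (2 : int)%:~R by [].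
rewrite denqVz //=; apply/negP => h.
have := dvdn_leq (isT : (0 < 2)%N) h; have := prime_gt1 hp.
by case: p hp ho h => [|[|[|]]].
Qed.

End RatZp.

Section Lin.
Variable n : nat.
Local Notation M := 'M[rat]_n.
Local Notation V := 'cV[rat]_n.

Lemma sum_keys (A : seq M -> V -> V) (l : seq (term n)) (s : seq (seq M)) :
  (forall x, A x 0 = 0) -> (forall x u v, A x (u + v) = A x u + A x v) ->
  uniq s -> {subset map fst l <= s} ->
  \sum_(t <- l) A t.1 t.2 = \sum_(x <- s) A x (ev l x).
Proof.
move=> A0 AD us; elim: l => [|t l IH] hs.
  by rewrite big_nil big1_seq // => x _; rewrite ev_nil A0.
rewrite big_cons IH; last by move=> x hx; apply: hs; rewrite /= inE hx orbT.
under [in RHS]eq_bigr => x _ do rewrite ev_cons AD.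
rewrite big_split /=; congr (_ + _).
have ht : t.1 \in s by apply: hs; rewrite /= inE eqxx.
rewrite (bigD1_seq t.1) //= /ev1 eqxx big1 ?addr0 // => x hx.
by rewrite eq_sym (negPf hx) A0.
Qed.

Lemma sum_keys0 (A : seq M -> V -> V) (l : seq (term n)) :
  (forall x, A x 0 = 0) -> (forall x u v, A x (u + v) = A x u + A x v) ->
  (forall x, ev l x = 0) -> \sum_(t <- l) A t.1 t.2 = 0.
Proof.
move=> A0 AD h; rewrite (sum_keys (s := undup (map fst l))) ?undup_uniq //.
  by rewrite big1 // => x _; rewrite h A0.
by move=> x; rewrite mem_undup.
Qed.

Lemma ev_bd_termZ (g : seq M) (a : rat) (m : V) y :
  ev (bd_term (g, a *: m)) y = a *: ev (bd_term (g, m)) y.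
Proof.
case: g => [|b g]; first by rewrite /bd_term /= ev_nil scaler0.
rewrite !ev_bd_term // !scalerDr -scalemxAr ev1Z scaler_sumr; congr (_ + _ + _).
  by apply: eq_bigr => k _; rewrite !scalerA mulrC -scalerA ev1Z.
by rewrite !scalerA mulrC -scalerA ev1Z.
Qed.

Lemma ev_hh0 x y : ev (hh (x, 0 : V)) y = 0.
Proof. by rewrite ev_hh big1 // => j _; rewrite scaler0 ev10. Qed.

Lemma ev_hhD x (u v : V) y : ev (hh (x, u + v)) y = ev (hh (x, u)) y + ev (hh (x, v)) y.
Proof. by rewrite !ev_hh -big_split; apply: eq_bigr => j _; rewrite scalerDr ev1D. Qed.

End Lin.

Lemma inZp_sign p j : prime p -> Defs.inZp p ((-1) ^+ j).
Proof.
move=> hp; elim: j => [|j IH]; first exact: (inZp_int 1 hp).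
by rewrite exprS; apply: inZp_mul => //; exact: (inZp_int (-1) hp).
Qed.

Lemma inZpmx_z p n : prime p -> inZpmx p (zz n).
Proof.
move=> hp; apply/forallP => i; apply/forallP => j; rewrite /zz mxE.
by case: (i == j); [exact: (inZp_int (-1) hp) | exact: (inZp_int 0 hp)].
Qed.

Lemma inOn_z p n : prime p -> inOn p (zz n).
Proof.
move=> hp; split.
- exact: inZpmx_z.
- by rewrite unitmxE det_scalar unitfE expf_neq0 // oppr_eq0 oner_eq0.
- by rewrite /zz invmx_scalar invrN1; exact: inZpmx_z.
- move=> v _; rewrite /zz mul_scalar_mx scaleN1r /sqform.
  by apply: eq_bigr => i _; rewrite mxE sqrrN.
Qed.

Lemma inZpvecZ p n (a : rat) (v : 'cV[rat]_n) : prime p -> Defs.inZp p a -> inZpvec p v -> inZpvec p (a *: v).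
Proof.
move=> hp ha /forallP hv; apply/forallP => i; rewrite mxE.
exact: inZp_mul.
Qed.

Unset Implicit Arguments.
Theorem corollaryD (p : nat) (hp : prime p) (hodd : odd p) (n i : nat)
  (hi : (2 * i + 8 <= n)%N) :
  homology_vanishes (inOn p (n:=n)) (inZpvec p (n:=n)) i.
Proof.
move=> c hc hcyc.
pose sc := fun t : term n => (t.1, (- (2%:R^-1)) *: t.2).
exists (flatten (map (@hh n) (map sc c))); split.
  move=> u /flatten_mapP[t' /mapP[t ht ->]] /mapP[j hj ->] /=.
  have [hs hg hm] := hc t ht.
  rewrite mem_iota add0n in hj.
  have hj' : (j <= size t.1)%N by move: hj => /andP[_]; rewrite ltnS.
  split.
  - by rewrite size_ins // hs.
  - move=> g; rewrite mem_cat inE => /orP[/mem_take/hg //|/orP[/eqP ->|/mem_drop/hg //]].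
    exact: inOn_z.
  - rewrite scalerA; apply: inZpvecZ => //.
    apply: inZp_mul => //; first exact: inZp_sign.
    have -> : - (2%:R^-1 : rat) = (-1) * 2%:R^-1 by rewrite mulN1r.
    apply: inZp_mul => //; first exact: (inZp_int (-1) hp).
    exact: inZp_half.
move=> y.
have E t : \sum_(u <- hh (sc t)) ev (bd_term u) y
    = ev1 y t.1 t.2 - ev (flatten (map (@hh n) (bd_term (sc t)))) y.
  rewrite -ev_flatten.
  have H := homotopy (sc t).1 (sc t).2 y.
  apply: (addIr (ev (flatten (map (@hh n) (bd_term (sc t)))) y)); rewrite subrK.
  rewrite -surjective_pairing in H; rewrite [LHS]H -ev1D /sc /=.
  rewrite scaleNr opprK -scalerDl.
  have -> : (2%:R^-1 + 2%:R^-1 : rat) = 1 by field.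
  by rewrite scale1r.
rewrite /bd ev_flatten big_flatten /= !big_map.
rewrite (eq_bigr _ (fun t _ => E t)) sumrB.
have -> : \sum_(t <- c) ev1 y t.1 t.2 = ev c y by rewrite /ev [RHS]big_mkcond.
suff -> : \sum_(t <- c) ev (flatten (map (@hh n) (bd_term (sc t)))) y = 0 by rewrite subr0.
rewrite (_ : \sum_(t <- c) _ = \sum_(u <- bd (map sc c)) ev (hh (u.1, u.2)) y); last first.
  rewrite /bd big_flatten /= !big_map; apply: eq_bigr => t _; rewrite ev_flatten.
  by apply: eq_bigr => -[a b] _.
apply: (sum_keys0 (A := fun x v => ev (hh (x, v)) y)).
- by move=> x; exact: ev_hh0.
- by move=> x u v; exact: ev_hhD.
move=> x; rewrite ev_flatten big_map.
under eq_bigr do rewrite /sc ev_bd_termZ.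
rewrite -scaler_sumr.
have := hcyc x; rewrite /bd ev_flatten => ->.
by rewrite scaler0.
Qed.
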